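(* Let $\mathcal{H}_A,\mathcal{H}_B$ have finite dimensions and let $\rho$ be any state on $\mathcal{H}_A\otimes\mathcal{H}_B$. Then $\mathcal{D}^A_G(\rho)=\mathcal{D}^A_{h=1,p=2}(\rho)$.
   Context: Let $d=\min\{\dim\mathcal{H}_A,\dim\mathcal{H}_B\}$. Let $\{A_i\}$, $\{B_j\}$ be orthonormal bases (w.r.t. the Hilbert–Schmidt inner product $\mathrm{tr}(XY)$) of the real spaces of Hermitian operators on $\mathcal{H}_A$, $\mathcal{H}_B$, and for a state $\sigma$ let $\mathcal{C}(\sigma)_{ij}=\mathrm{tr}(\sigma\,A_i\otimes B_j)$ with singular values $\sigma_1,\ldots,\sigma_{d^2}$. Then $\mathcal{M}_{1,2}(\sigma)=(\sum_k\sigma_k^2)^{1/2}$. A projective measurement $\Pi^A$ on $A$ is given by an orthonormal basis $\{|l\rangle\}$ of $\mathcal{H}_A$ and acts by $\Pi^A[\rho]=\sum_l(|l\rangle\langle l|\otimes\mathbb{1})\rho(|l\rangle\langle l|\otimes\mathbb{1})$. Define $\mathcal{D}^A_{1,2}(\rho)=\mathcal{M}_{1,2}(\rho)^2-\max_{\Pi^A}\mathcal{M}_{1,2}(\Pi^A[\rho])^2$, the maximum over all projective measurements on $A$. The geometric quantum discord is $\mathcal{D}^A_G(\rho)=\min_\chi\|\rho-\chi\|^2$ (Hilbert–Schmidt norm), minimized over classical-quantum states $\chi=\sum_k p_k|k\rangle\langle k|\otimes\chi_k$ with $\{|k\rangle\}$ an orthonormal basis of $\mathcal{H}_A$, $(p_k)$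 a probability vector and $\chi_k$ states on $\mathcal{H}_B$. *)

(* Defs.v *)
From HB Require Import structures.
From mathcomp Require Import all_boot all_order all_algebra.
From mathcomp Require Import complex mxtens.
From mathcomp Require Import classical_sets reals.
Set Implicit Arguments. Unset Strict Implicit. Unset Printing Implicit Defensive.
Import Order.TTheory GRing.Theory Num.Theory.
Local Open Scope ring_scope.
Local Open Scope classical_set_scope.

Section QDefs.
Variable R : realType.
Local Notation C := (R[i]).

Definition adjmx {m n : nat} (X : 'M[C]_(m, n)) : 'M[C]_(n, m) :=
  (map_mx Num.conj X)^T.

Definition hermitian {n : nat} (X : 'M[C]_n) : Prop := adjmx X = X.

Definition psd {n : nat} (X : 'M[C]_n) : Prop :=
  forall v : 'cV[C]_n, 0 <= (adjmx v *m X *m v) 0 0.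

Definition is_state {n : nat} (X : 'M[C]_n) : Prop :=
  [/\ hermitian X, psd X & \tr X = 1].

Definition unitary {n : nat} (U : 'M[C]_n) : Prop := adjmx U *m U = 1%:M.

Definition proj1 {n : nat} (u : 'cV[C]_n) : 'M[C]_n := u *m adjmx u.

Definition herm_onb {n : nat} (E : 'I_(n * n) -> 'M[C]_n) : Prop :=
  [/\ (forall i, hermitian (E i)),
      (forall i j, \tr (E i *m E j) = (i == j)%:R) &
      (forall X : 'M[C]_n, hermitian X ->
         exists c : 'I_(n * n) -> R, X = \sum_i (c i)%:C%C *: E i)].

(* correlation matrix C(sigma)_{ij} = tr(sigma A_i (x) B_j)  (real for Hermitian sigma) *)
Definition corrmx {dA dB : nat} (EA : 'I_(dA * dA) -> 'M[C]_dA)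
  (EB : 'I_(dB * dB) -> 'M[C]_dB) (s : 'M[C]_(dA * dB)) :
  'M[R]_(dA * dA, dB * dB) :=
  \matrix_(i, j) complex.Re (\tr (s *m (EA i *t EB j))).

(* M_{1,2}(sigma) = (sum_k sigma_k^2)^(1/2), where the sigma_k are the singular
   values of C(sigma), i.e. sigma_k^2 are the eigenvalues of C^T C, so that
   sum_k sigma_k^2 = tr (C^T C). *)
Definition M12 {dA dB : nat} (EA : 'I_(dA * dA) -> 'M[C]_dA)
  (EB : 'I_(dB * dB) -> 'M[C]_dB) (s : 'M[C]_(dA * dB)) : R :=
  Num.sqrt (\tr ((corrmx EA EB s)^T *m corrmx EA EB s)).

Definition measA {dA dB : nat} (U : 'M[C]_dA) (rho : 'M[C]_(dA * dB)) :
  'M[C]_(dA * dB) :=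
  \sum_(l < dA) ((proj1 (col l U) *t (1%:M : 'M[C]_dB)) *m rho
                   *m (proj1 (col l U) *t (1%:M : 'M[C]_dB))).

Definition D12 {dA dB : nat} (EA : 'I_(dA * dA) -> 'M[C]_dA)
  (EB : 'I_(dB * dB) -> 'M[C]_dB) (rho : 'M[C]_(dA * dB)) : R :=
  M12 EA EB rho ^+ 2
  - sup [set M12 EA EB (measA U rho) ^+ 2 | U in [set U : 'M[C]_dA | unitary U]].

Definition cq_state {dA dB : nat} (chi : 'M[C]_(dA * dB)) : Prop :=
  exists (U : 'M[C]_dA) (p : 'I_dA -> R) (chis : 'I_dA -> 'M[C]_dB),
    [/\ unitary U, (forall k, 0 <= p k), \sum_k p k = 1,
        (forall k, is_state (chis k)) &
        chi = \sum_k (p k)%:C%C *: (proj1 (col k U) *t chis k)].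

Definition hs_norm2 {n : nat} (X : 'M[C]_n) : R := complex.Re (\tr (adjmx X *m X)).

Definition DG {dA dB : nat} (rho : 'M[C]_(dA * dB)) : R :=
  inf [set hs_norm2 (rho - chi) | chi in [set chi | @cq_state dA dB chi]].

End QDefs.

(* Main.v *)
Require Import Defs.
From HB Require Import structures.
From mathcomp Require Import all_boot all_order all_algebra.
From mathcomp Require Import complex mxtens.
From mathcomp Require Import classical_sets reals.
From mathcomp Require Import ring lra.
Set Implicit Arguments. Unset Strict Implicit. Unset Printing Implicit Defensive.
Import Order.TTheory GRing.Theory Num.Theory.
Local Open Scope ring_scope.
Local Open Scope classical_set_scope.

Section Aux.
Variable R : realType.
Local Notation C := (R[i]).

Lemma adjmxK m n (X : 'M[C]_(m,n)) : adjmx (adjmx X) = X.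
Proof. by apply/matrixP=> i j; rewrite !mxE conjCK. Qed.

Lemma adjmxM m n p (X : 'M[C]_(m,n)) (Y : 'M[C]_(n,p)) :
  adjmx (X *m Y) = adjmx Y *m adjmx X.
Proof. by rewrite /adjmx map_mxM trmx_mul. Qed.

Lemma adjmxD m n (X Y : 'M[C]_(m,n)) : adjmx (X + Y) = adjmx X + adjmx Y.
Proof. by rewrite /adjmx map_mxD linearD. Qed.

Lemma adjmxN m n (X : 'M[C]_(m,n)) : adjmx (- X) = - adjmx X.
Proof. by rewrite /adjmx map_mxN linearN. Qed.

Lemma adjmxB m n (X Y : 'M[C]_(m,n)) : adjmx (X - Y) = adjmx X - adjmx Y.
Proof. by rewrite adjmxD adjmxN. Qed.

Lemma adjmxZ m n (c : C) (X : 'M[C]_(m,n)) : adjmx (c *: X) = Num.conj c *: adjmx X.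
Proof. by apply/matrixP=> i j; rewrite !mxE rmorphM. Qed.

Lemma adjmx_sum m n I (r : seq I) (P : pred I) (F : I -> 'M[C]_(m,n)) :
  adjmx (\sum_(i <- r | P i) F i) = \sum_(i <- r | P i) adjmx (F i).
Proof.
elim/big_rec2: _ => [|i y1 y2 _ <-]; last by rewrite adjmxD.
by apply/matrixP=> i j; rewrite !mxE rmorph0.
Qed.

Lemma adjmx0 m n : adjmx (0 : 'M[C]_(m,n)) = 0.
Proof. by apply/matrixP=> i j; rewrite !mxE rmorph0. Qed.

Lemma adjmx1 n : adjmx (1%:M : 'M[C]_n) = 1%:M.
Proof. by apply/matrixP=> i j; rewrite !mxE eq_sym rmorph_nat. Qed.

Lemma adjmx_tens m n p q (X : 'M[C]_(m,n)) (Y : 'M[C]_(p,q)) :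
  adjmx (X *t Y) = adjmx X *t adjmx Y.
Proof. by apply/matrixP=> i j; rewrite !mxE rmorphM. Qed.

Lemma tr_adjmx n (X : 'M[C]_n) : \tr (adjmx X) = Num.conj (\tr X).
Proof. rewrite /mxtrace rmorph_sum; apply: eq_bigr=> i _; by rewrite !mxE. Qed.

Lemma tensmxDl m n p q (X Y : 'M[C]_(m,n)) (Z : 'M[C]_(p,q)) :
  (X + Y) *t Z = X *t Z + Y *t Z.
Proof. by apply/matrixP=> i j; rewrite !mxE mulrDl. Qed.
Lemma tensmxDr m n p q (X : 'M[C]_(m,n)) (Y Z : 'M[C]_(p,q)) :
  X *t (Y + Z) = X *t Y + X *t Z.
Proof. by apply/matrixP=> i j; rewrite !mxE mulrDr. Qed.
Lemma tensmxZl m n p q c (X : 'M[C]_(m,n)) (Z : 'M[C]_(p,q)) :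
  (c *: X) *t Z = c *: (X *t Z).
Proof. by apply/matrixP=> i j; rewrite !mxE mulrA. Qed.
Lemma tensmxZr m n p q c (X : 'M[C]_(m,n)) (Z : 'M[C]_(p,q)) :
  X *t (c *: Z) = c *: (X *t Z).
Proof. by apply/matrixP=> i j; rewrite !mxE mulrCA. Qed.
Lemma tensmx_suml m n p q I (r : seq I) (F : I -> 'M[C]_(m,n)) (Z : 'M[C]_(p,q)) :
  (\sum_(i <- r) F i) *t Z = \sum_(i <- r) (F i *t Z).
Proof.
elim/big_rec2: _ => [|i y1 y2 _ <-]; last by rewrite tensmxDl.
exact: tens0mx.
Qed.
Lemma tensmx_sumr m n p q I (r : seq I) (F : I -> 'M[C]_(p,q)) (Z : 'M[C]_(m,n)) :
  Z *t (\sum_(i <- r) F i) = \sum_(i <- r) (Z *t F i).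
Proof.
elim/big_rec2: _ => [|i y1 y2 _ <-]; last by rewrite tensmxDr.
exact: tensmx0.
Qed.

Lemma sum_tens_index m n (F : 'I_(m * n) -> C) :
  \sum_k F k = \sum_(i < m) \sum_(j < n) F (mxtens_index (i, j)).
Proof.
rewrite pair_big /=.
rewrite (reindex (@mxtens_index m n)) /=; first by apply: eq_bigr => -[i j].
by exists (@mxtens_unindex m n) => k _; [rewrite mxtens_indexK | rewrite mxtens_unindexK].
Qed.

Lemma tr_tens m n (X : 'M[C]_m) (Y : 'M[C]_n) : \tr (X *t Y) = \tr X * \tr Y.
Proof.
rewrite /mxtrace sum_tens_index mulr_suml; apply: eq_bigr => i _.
rewrite mulr_sumr; apply: eq_bigr => j _; by rewrite tensmxE.
Qed.

Lemma tens11 m n : (1%:M : 'M[C]_m) *t (1%:M : 'M[C]_n) = 1%:M.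
Proof.
apply/matrixP=> k l.
case: (mxtens_indexP k) => i j; case: (mxtens_indexP l) => i' j'.
rewrite tensmxE !mxE -natrM; congr (_%:R).
rewrite (inj_eq (can_inj (@mxtens_indexK m n))) xpair_eqE.
by case: (i == i'); case: (j == j').
Qed.


Lemma conjC_i : Num.conj ('i%C : C) = - 'i%C.
Proof. by apply/eqP; rewrite eq_complex /= oppr0 !eqxx. Qed.

Lemma conj_real_eq (c : C) : Num.conj c = c -> c = (complex.Re c)%:C%C.
Proof.
case: c => a b /= [] h; apply/eqP; rewrite eq_complex /= eqxx /=.
apply/eqP; lra.
Qed.

Lemma tr_herm_real n (X Y : 'M[C]_n) : Defs.hermitian X -> Defs.hermitian Y ->
  Num.conj (\tr (X *m Y)) = \tr (X *m Y).
Proof.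
move=> hX hY; have := tr_adjmx (X *m Y).
by rewrite adjmxM hX hY mxtrace_mulC => <-.
Qed.

Definition expand (I : finType) n (K : I -> 'M[C]_n) (Z : 'M[C]_n) :=
  \sum_i \tr (Z *m K i) *: K i.

Lemma expand_sum (I : finType) n (K : I -> 'M[C]_n) J (r : seq J) (G : J -> 'M[C]_n) :
  expand K (\sum_(j <- r) G j) = \sum_(j <- r) expand K (G j).
Proof.
rewrite /expand exchange_big /=; apply: eq_bigr => i _.
by rewrite mulmx_suml raddf_sum scaler_suml.
Qed.

Lemma expandZ (I : finType) n (K : I -> 'M[C]_n) c Z :
  expand K (c *: Z) = c *: expand K Z.
Proof.
rewrite /expand scaler_sumr; apply: eq_bigr => i _.
by rewrite -scalemxAl mxtraceZ scalerA.
Qed.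

Lemma expandD (I : finType) n (K : I -> 'M[C]_n) Y Z :
  expand K (Y + Z) = expand K Y + expand K Z.
Proof.
rewrite /expand -big_split; apply: eq_bigr => i _.
by rewrite mulmxDl mxtraceD scalerDl.
Qed.

Lemma onb_herm n (E : 'I_(n * n) -> 'M[C]_n) : herm_onb E ->
  forall X, Defs.hermitian X -> expand E X = X.
Proof.
case=> _ hon hsp X hX; have [c ->] := hsp X hX.
rewrite expand_sum; apply: eq_bigr => i _; rewrite expandZ; congr (_ *: _).
rewrite /expand (bigD1 i) //= big1 ?addr0; first by rewrite hon eqxx scale1r.
by move=> j /negbTE ji; rewrite hon eq_sym ji scale0r.
Qed.

Lemma onb_expand n (E : 'I_(n * n) -> 'M[C]_n) : herm_onb E ->
  forall Z, expand E Z = Z.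
Proof.
move=> hE Z.
pose c : C := - ('i%C * 2%:R^-1).
pose H1 := 2%:R^-1 *: (Z + adjmx Z).
pose H2 := c *: (Z - adjmx Z).
have h2 : (2%:R : C) != 0 by rewrite pnatr_eq0.
have cc : Num.conj c = - c.
  by rewrite /c rmorphN rmorphM /= conjC_i fmorphV rmorph_nat mulNr opprK.
have hH1 : Defs.hermitian H1.
  by rewrite /Defs.hermitian /H1 adjmxZ fmorphV rmorph_nat adjmxD adjmxK addrC.
have hH2 : Defs.hermitian H2.
  by rewrite /Defs.hermitian /H2 adjmxZ cc adjmxB adjmxK scaleNr -scalerN opprB.
have -> : Z = H1 + 'i%C *: H2.
  have ic : 'i%C * c = 2%:R^-1.
    by rewrite /c mulrN mulrA -expr2 sqr_i mulN1r opprK.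
  have e : forall x w : C, x = 2%:R^-1 * (x + w) + 'i%C * (c * (x - w)).
    by move=> x w; rewrite mulrA ic -mulrDr addrACA subrr addr0 -mulr2n -(mulr_natl x 2) mulrA mulVf // mul1r.
  by apply/matrixP=> i j; rewrite /H1 /H2 !mxE; apply: e.
by rewrite expandD expandZ !onb_herm.
Qed.


Lemma mxtrace_sum n I (r : seq I) (F : I -> 'M[C]_n) :
  \tr (\sum_(i <- r) F i) = \sum_(i <- r) \tr (F i).
Proof.
elim/big_rec2: _ => [|i y1 y2 _ <-]; last by rewrite mxtraceD.
exact: mxtrace0.
Qed.

Lemma delta_tens m n (k l : 'I_(m * n)) :
  delta_mx k l = delta_mx (mxtens_unindex k).1 (mxtens_unindex l).1 *t
                 delta_mx (mxtens_unindex k).2 (mxtens_unindex l).2 :> 'M[C]_(m * n).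
Proof.
apply/matrixP=> k' l'; rewrite !mxE -natrM; congr (_%:R).
rewrite -(inj_eq (can_inj (@mxtens_unindexK m n))) -(inj_eq (can_inj (@mxtens_unindexK m n))).
case: (mxtens_unindex k') => [a1 a2]; case: (mxtens_unindex k) => [b1 b2].
case: (mxtens_unindex l') => [c1 c2]; case: (mxtens_unindex l) => [d1 d2] /=.
rewrite !xpair_eqE.
by case: (a1 == b1); case: (a2 == b2); case: (c1 == d1); case: (c2 == d2).
Qed.

Definition KAB a b (EA : 'I_(a * a) -> 'M[C]_a) (EB : 'I_(b * b) -> 'M[C]_b)
  (p : 'I_(a * a) * 'I_(b * b)) : 'M[C]_(a * b) := EA p.1 *t EB p.2.

Lemma tens_expand a b (EA : 'I_(a * a) -> 'M[C]_a) (EB : 'I_(b * b) -> 'M[C]_b) :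
  herm_onb EA -> herm_onb EB -> forall Z, expand (KAB EA EB) Z = Z.
Proof.
move=> hA hB.
have hT : forall X Y, expand (KAB EA EB) (X *t Y) = X *t Y.
  move=> X Y; rewrite -{2}(onb_expand hA X) -{2}(onb_expand hB Y).
  rewrite /expand tensmx_suml.
  under [RHS]eq_bigr do rewrite tensmx_sumr.
  rewrite pair_bigA /=; apply: congr_big => // -[i j] _.
  by rewrite /KAB /= tensmx_mul tr_tens tensmxZl tensmxZr scalerA mulrC.
move=> Z; rewrite (matrix_sum_delta Z) expand_sum; apply: eq_bigr => k _.
rewrite expand_sum; apply: eq_bigr => l _.
by rewrite expandZ delta_tens hT.
Qed.

Lemma herm_tens m n (X : 'M[C]_m) (Y : 'M[C]_n) :
  Defs.hermitian X -> Defs.hermitian Y -> Defs.hermitian (X *t Y).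
Proof. by move=> hX hY; rewrite /Defs.hermitian adjmx_tens hX hY. Qed.

Lemma hs_ge0 n (X : 'M[C]_n) : 0 <= hs_norm2 X.
Proof.
rewrite /hs_norm2.
have : 0 <= \tr (adjmx X *m X).
  rewrite /mxtrace; apply: sumr_ge0 => i _; rewrite mxE; apply: sumr_ge0 => j _.
  by rewrite !mxE mulrC; apply: mulcJ_ge0.
by rewrite lecE /= => /andP[_].
Qed.

Lemma M12_hs a b (EA : 'I_(a * a) -> 'M[C]_a) (EB : 'I_(b * b) -> 'M[C]_b) s :
  herm_onb EA -> herm_onb EB -> Defs.hermitian s ->
  M12 EA EB s ^+ 2 = hs_norm2 s.
Proof.
move=> hA hB hs.
pose c p := \tr (s *m KAB EA EB p).
have creal : forall p, c p = (complex.Re (c p))%:C%C.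
  move=> p; apply: conj_real_eq; apply: tr_herm_real => //.
  by apply: herm_tens; [case: hA | case: hB].
have -> : hs_norm2 s = \sum_p complex.Re (c p) ^+ 2.
  rewrite /hs_norm2 hs -{2}(tens_expand hA hB s) /expand mulmx_sumr mxtrace_sum.
  have -> : \sum_(i : 'I_(a * a) * 'I_(b * b)) \tr (s *m (\tr (s *m KAB EA EB i) *: KAB EA EB i))
     = (\sum_p (complex.Re (c p) ^+ 2))%:C%C.
    rewrite rmorph_sum; apply: eq_bigr => p _.
    by rewrite -scalemxAr mxtraceZ -/(c p) (creal p) -rmorphM expr2.
  by [].
rewrite /M12 sqr_sqrtr; last first.
  rewrite /mxtrace; apply: sumr_ge0 => j _; rewrite mxE; apply: sumr_ge0 => i _.
  by rewrite !mxE -expr2 sqr_ge0.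
transitivity (\sum_i \sum_j complex.Re (c (i, j)) ^+ 2); last first.
  by rewrite pair_bigA.
rewrite /mxtrace exchange_big; apply: eq_bigr => j _.
rewrite mxE; apply: eq_bigr => i _.
by rewrite !mxE expr2.
Qed.

End Aux.

Section Meas.
Variable R : realType.
Local Notation C := (R[i]).
Variables dA dB : nat.
Variable U : 'M[C]_dA.
Hypothesis hU : Defs.unitary U.

Local Notation P l := (Defs.proj1 (col l U)).
Local Notation Q l := (Defs.proj1 (col l U) *t (1%:M : 'M[C]_dB)).
Local Notation Pi := (measA (dB := dB) U).

Lemma col_orth l m : adjmx (col l U) *m col m U = ((l == m)%:R)%:M.
Proof.
apply/matrixP => i j; rewrite !ord1.
have := congr1 (fun M : 'M[C]_dA => M l m) (hU : adjmx U *m U = 1%:M); rewrite !mxE => <-.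
by apply: eq_bigr => k _; rewrite !mxE.
Qed.

Lemma PP l m : P l *m P m = (l == m)%:R *: P l.
Proof.
rewrite /Defs.proj1 mulmxA -[col l U *m _ *m _]mulmxA col_orth.
by rewrite mul_mx_scalar -scalemxAl; case: eqP => [->|_]; rewrite ?scale0r.
Qed.

Lemma QQ l m : Q l *m Q m = (l == m)%:R *: Q l.
Proof. by rewrite tensmx_mul PP mulmx1 tensmxZl. Qed.

Lemma herm_proj1 n (u : 'cV[C]_n) : Defs.hermitian (Defs.proj1 u).
Proof. by rewrite /Defs.hermitian /Defs.proj1 adjmxM adjmxK. Qed.

Lemma Qherm l : Defs.hermitian (Q l).
Proof. by apply: herm_tens; [exact: herm_proj1 | exact: adjmx1]. Qed.

Lemma sumP : \sum_l P l = 1%:M.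
Proof.
have hU' : U *m adjmx U = 1%:M by apply: mulmx1C; exact: hU.
rewrite -hU'; apply/matrixP => i j; rewrite summxE !mxE.
by apply: eq_bigr => k _; rewrite !mxE big_ord1 !mxE.
Qed.

Lemma sumQ : \sum_l Q l = 1%:M.
Proof. by rewrite -tensmx_suml sumP tens11. Qed.

Lemma PiE X : Pi X = \sum_l Q l *m X *m Q l.
Proof. by []. Qed.

Lemma Pi_tr_adj X Y : \tr (Pi X *m Y) = \tr (X *m Pi Y).
Proof.
rewrite !PiE mulmx_suml mulmx_sumr !mxtrace_sum; apply: eq_bigr => l _.
by rewrite -!mulmxA mxtrace_mulC !mulmxA.
Qed.

Lemma Pi_adj X : adjmx (Pi X) = Pi (adjmx X).
Proof.
rewrite !PiE adjmx_sum; apply: eq_bigr => l _.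
by rewrite !adjmxM Qherm mulmxA.
Qed.

Lemma PiD X Y : Pi (X + Y) = Pi X + Pi Y.
Proof. by rewrite !PiE -big_split; apply: eq_bigr => l _; rewrite mulmxDr mulmxDl. Qed.

Lemma PiN X : Pi (- X) = - Pi X.
Proof. by rewrite !PiE -sumrN; apply: eq_bigr => l _; rewrite mulmxN mulNmx. Qed.

Lemma PiB X Y : Pi (X - Y) = Pi X - Pi Y.
Proof. by rewrite PiD PiN. Qed.

Lemma PiZ c X : Pi (c *: X) = c *: Pi X.
Proof. rewrite !PiE scaler_sumr; apply: eq_bigr => l _.
have h : forall (c0 : C) (A B D : 'M[C]_(dA*dB)), A *m (c0 *: B) *m D = c0 *: (A *m B *m D).
  by move=> c0 A B D; rewrite -scalemxAr -scalemxAl.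
exact: h. Qed.

Lemma Pi_sum I (r : seq I) (F : I -> 'M[C]_(dA * dB)) :
  Pi (\sum_(i <- r) F i) = \sum_(i <- r) Pi (F i).
Proof.
elim/big_rec2: _ => [|i y1 y2 _ <-]; last by rewrite PiD.
by rewrite PiE big1 // => l _; rewrite mulmx0 mul0mx.
Qed.

Lemma PiK X : Pi (Pi X) = Pi X.
Proof.
rewrite [Pi (Pi X)]PiE; apply: eq_bigr => l _.
rewrite PiE mulmx_sumr mulmx_suml (bigD1 l) //= big1 ?addr0.
  by rewrite !mulmxA QQ eqxx scale1r -mulmxA QQ eqxx scale1r.
move=> m /negbTE ml; rewrite !mulmxA QQ eq_sym ml scale0r !mul0mx //.
Qed.

Lemma Pi_cqterm k (Y : 'M[C]_dB) : Pi (P k *t Y) = P k *t Y.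
Proof.
rewrite PiE (bigD1 k) //= big1 ?addr0.
  by rewrite !tensmx_mul PP eqxx scale1r PP eqxx scale1r mulmx1 mul1mx.
move=> m /negbTE mk.
by rewrite !tensmx_mul PP mk scale0r mul0mx tens0mx.
Qed.

Lemma Pi_tr X : \tr (Pi X) = \tr X.
Proof.
rewrite PiE mxtrace_sum.
transitivity (\tr ((\sum_l Q l) *m X)); last by rewrite sumQ mul1mx.
rewrite mulmx_suml mxtrace_sum; apply: eq_bigr => l _.
by rewrite mxtrace_mulC mulmxA QQ eqxx scale1r.
Qed.


Lemma ReD (x y : C) : complex.Re (x + y) = complex.Re x + complex.Re y.
Proof. by case: x => ? ?; case: y. Qed.

Lemma hsD (A B : 'M[C]_(dA * dB)) : hs_norm2 (A + B) =
  hs_norm2 A + hs_norm2 B + complex.Re (\tr (adjmx A *m B)) + complex.Re (\tr (adjmx B *m A)).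
Proof.
rewrite /hs_norm2 adjmxD mulmxDl !mulmxDr !mxtraceD !ReD.
by ring.
Qed.

Lemma Pyth rho chi : Pi chi = chi ->
  hs_norm2 (rho - chi) = hs_norm2 (rho - Pi rho) + hs_norm2 (Pi rho - chi).
Proof.
move=> hchi.
have e : rho - chi = (rho - Pi rho) + (Pi rho - chi) by rewrite addrA subrK.
have hz : Pi (rho - Pi rho) = 0 by rewrite PiB PiK subrr.
have e2 : Pi rho - chi = Pi (rho - chi) by rewrite PiB hchi.
rewrite e e2 hsD -Pi_tr_adj -Pi_adj hz adjmx0 mul0mx mxtrace0.
rewrite Pi_adj Pi_tr_adj hz mulmx0 mxtrace0 /=.
by rewrite !addr0.
Qed.

Lemma Pi0 : Pi 0 = 0.
Proof. by rewrite -(scale0r 0) PiZ !scale0r. Qed.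

Lemma hs_Pi_le rho chi : Pi chi = chi ->
  hs_norm2 rho - hs_norm2 (Pi rho) <= hs_norm2 (rho - chi).
Proof.
move=> hchi.
have := Pyth rho Pi0; rewrite !subr0 => ->.
rewrite (Pyth rho hchi) addrK lerDl; exact: hs_ge0.
Qed.

Lemma hs_Pi_eq rho : hs_norm2 (rho - Pi rho) = hs_norm2 rho - hs_norm2 (Pi rho).
Proof. by have := Pyth rho Pi0; rewrite !subr0 => ->; rewrite addrK. Qed.

End Meas.

Lemma cq_fixed (R : realType) dA dB (chi : 'M[R[i]]_(dA * dB)) (U : 'M[R[i]]_dA) (p : 'I_dA -> R) (chis : 'I_dA -> 'M[R[i]]_dB) :
  Defs.unitary U ->
  chi = \sum_k (p k)%:C%C *: (Defs.proj1 (col k U) *t chis k) ->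
  measA U chi = chi.
Proof.
move=> hU ->; rewrite Pi_sum; apply: eq_bigr => k _.
by rewrite PiZ Pi_cqterm.
Qed.

Section Psd.
Variable R : realType.
Local Notation C := (R[i]).

Lemma adj_delta n (i : 'I_n) : adjmx (delta_mx i 0 : 'cV[C]_n) = delta_mx 0 i.
Proof. by apply/matrixP=> a b; rewrite !mxE rmorph_nat andbC. Qed.

Lemma quad_delta n (X : 'M[C]_n) i j :
  (adjmx (delta_mx i 0 : 'cV[C]_n) *m X *m (delta_mx j 0 : 'cV[C]_n)) 0 0 = X i j.
Proof.
rewrite adj_delta -(rowE i X) !mxE.
rewrite (bigD1 j) //= big1 => [|k /negbTE kj].
  by rewrite !mxE !eqxx mulr1 addr0.
by rewrite !mxE kj mulr0.
Qed.

Lemma quad_delta_mx n (X : 'M[C]_n) i j :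
  adjmx (delta_mx i 0 : 'cV[C]_n) *m X *m (delta_mx j 0 : 'cV[C]_n) = (X i j)%:M.
Proof. by apply/matrixP=> p q; rewrite !ord1 quad_delta mxE eqxx mulr1n. Qed.

Lemma psd_diag n (X : 'M[C]_n) i : Defs.psd X -> 0 <= X i i.
Proof. by move=> h; have := h (delta_mx i 0); rewrite quad_delta. Qed.

Lemma psd_tr0 n (X : 'M[C]_n) : Defs.hermitian X -> Defs.psd X -> \tr X = 0 -> X = 0.
Proof.
move=> hX pX t0.
have diag0 : forall i, X i i = 0.
  by move=> i; apply: (psumr_eq0P _ t0) => // k _; apply: psd_diag.
apply/matrixP => a b; rewrite mxE.
case: (eqVneq a b) => [-> | nab]; first exact: diag0.
set x := X a b.
have Xba : X b a = Num.conj x.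
  by rewrite -[in LHS]hX !mxE.
have := pX ((- x) *: delta_mx a 0 + delta_mx b 0).
rewrite adjmxD adjmxZ !(mulmxDl, mulmxDr) -!scalemxAl -!scalemxAr !quad_delta_mx !mxE /=.
rewrite !diag0 Xba -/x.
set e := (X in 0 <= X -> _).
have -> : e = - (x * Num.conj x) *+ 2.
  rewrite /e rmorphN /=; ring.
rewrite pmulrn_lge0 // oppr_ge0 => h.
have : x * Num.conj x == 0 by rewrite eq_le h mul_conjC_ge0.
by rewrite mul_conjC_eq0 => /eqP.
Qed.


Lemma psd_proj1 n (u : 'cV[C]_n) : Defs.psd (Defs.proj1 u).
Proof.
move=> v.
have e : adjmx v *m (u *m adjmx u) *m v = adjmx (adjmx u *m v) *m (adjmx u *m v).
  by rewrite adjmxM adjmxK !mulmxA.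
rewrite /Defs.proj1 e mxE big_ord1 !mxE mulrC.
exact: mul_conjC_ge0.
Qed.

Lemma psd_scale n (c : C) (X : 'M[C]_n) : 0 <= c -> Defs.psd X -> Defs.psd (c *: X).
Proof.
move=> c0 pX v; rewrite -scalemxAr -scalemxAl mxE; apply: mulr_ge0 => //; exact: pX.
Qed.

Lemma herm_scale n (r : R) (X : 'M[C]_n) : Defs.hermitian X -> Defs.hermitian (r%:C%C *: X).
Proof.
move=> hX; rewrite /Defs.hermitian adjmxZ hX; congr (_ *: _).
by apply/eqP; rewrite eq_complex /= oppr0 !eqxx.
Qed.

Lemma delta_state n (b : 'I_n) : is_state (delta_mx b b : 'M[C]_n).
Proof.
have e : delta_mx b b = Defs.proj1 (delta_mx b 0 : 'cV[C]_n).
  by rewrite /Defs.proj1 adj_delta mul_delta_mx.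
split.
- by rewrite e; exact: herm_proj1.
- by rewrite e; exact: psd_proj1.
- rewrite /mxtrace (bigD1 b) //= big1 ?addr0; first by rewrite mxE !eqxx.
  by move=> k /negbTE kb; rewrite mxE kb.
Qed.

End Psd.

Section Meas2.
Variable R : realType.
Local Notation C := (R[i]).
Variables dA dB : nat.
Variable U : 'M[C]_dA.
Hypothesis hU : Defs.unitary U.
Variable rho : 'M[C]_(dA * dB).
Hypothesis hrho : is_state rho.

Local Notation P l := (Defs.proj1 (col l U)).
Local Notation Q l := (Defs.proj1 (col l U) *t (1%:M : 'M[C]_dB)).

Definition Yl l : 'M[C]_(1 * dB) :=
  (adjmx (col l U) *t (1%:M : 'M[C]_dB)) *m rho *m (col l U *t (1%:M : 'M[C]_dB)).
Definition Xl l : 'M[C]_dB := castmx (mul1n dB, mul1n dB) (Yl l).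

Lemma Y_tens l : (1%:M : 'M[C]_1) *t Xl l = Yl l.
Proof. by rewrite tens_scalar1mx /Xl castmxK. Qed.

Lemma QrhoQ l : Q l *m rho *m Q l = P l *t Xl l.
Proof.
have hQ : Q l = (col l U *t (1%:M : 'M[C]_dB)) *m (adjmx (col l U) *t (1%:M : 'M[C]_dB)).
  by rewrite tensmx_mul mulmx1.
transitivity ((col l U *t (1%:M : 'M[C]_dB)) *m Yl l *m (adjmx (col l U) *t (1%:M : 'M[C]_dB))).
  by rewrite hQ /Yl !mulmxA.
by rewrite -Y_tens !tensmx_mul mulmx1 mul1mx mulmx1.
Qed.


Lemma Xherm l : Defs.hermitian (Xl l).
Proof.
case: hrho => hr _ _.
have hY : adjmx (Yl l) = Yl l.
  by rewrite /Yl !adjmxM !adjmx_tens adjmxK adjmx1 hr !mulmxA.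
have : (1%:M : 'M[C]_1) *t adjmx (Xl l) = (1%:M : 'M[C]_1) *t Xl l.
  by rewrite -{1}(adjmx1 R 1) -adjmx_tens Y_tens hY.
by rewrite !tens_scalar1mx => /(can_inj (castmxK _ _)).
Qed.

Lemma tens11_entry (M : 'M[C]_1) : ((1%:M : 'M[C]_1) *t M) 0 0 = M 0 0.
Proof. by rewrite tens_scalar1mx castmxE !ord1. Qed.

Lemma Xpsd l : Defs.psd (Xl l).
Proof.
case: hrho => _ pr _ v.
have := pr (col l U *t v : 'cV[C]_(dA * dB)).
have e1 : adjmx (col l U *t v) =
   ((1%:M : 'M[C]_1) *t adjmx v) *m (adjmx (col l U) *t (1%:M : 'M[C]_dB)).
  by rewrite adjmx_tens tensmx_mul mul1mx mulmx1.
have e2 : col l U *t v = (col l U *t (1%:M : 'M[C]_dB)) *m ((1%:M : 'M[C]_1) *t v).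
  by rewrite tensmx_mul mul1mx mulmx1.
rewrite e1 e2.
have -> : (1%:M *t adjmx v) *m (adjmx (col l U) *t 1%:M) *m rho *m
     ((col l U *t 1%:M) *m (1%:M *t v)) = (1%:M *t adjmx v) *m Yl l *m (1%:M *t v).
  by rewrite /Yl !mulmxA.
by rewrite -Y_tens !tensmx_mul !mulmx1 tens11_entry.
Qed.

Lemma trP l : \tr (P l) = 1.
Proof.
by rewrite /Defs.proj1 mxtrace_mulC col_orth // eqxx mxtrace_scalar.
Qed.

Lemma Xtr l : \tr (Xl l) = \tr (Q l *m rho *m Q l).
Proof. by rewrite QrhoQ tr_tens trP mul1r. Qed.

Lemma Xtr_ge0 l : 0 <= \tr (Xl l).
Proof. by apply: sumr_ge0 => i _; apply: psd_diag; apply: Xpsd. Qed.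

Lemma sum_Xtr : \sum_l \tr (Xl l) = 1.
Proof.
under eq_bigr do rewrite Xtr.
case: hrho => _ _ t1.
by rewrite -mxtrace_sum -(PiE U) Pi_tr.
Qed.


Lemma ge0_realC (z : C) : 0 <= z -> z = (complex.Re z)%:C%C.
Proof.
case: z => a b; rewrite lecE /= => /andP[/eqP b0 _].
by apply/eqP; rewrite eq_complex /= b0 !eqxx.
Qed.

Lemma Re_sum I (r : seq I) (F : I -> C) :
  complex.Re (\sum_(i <- r) F i) = \sum_(i <- r) complex.Re (F i).
Proof. by elim/big_rec2: _ => [|i y1 y2 _ <-] //; rewrite ReD. Qed.

Variable b0 : 'I_dB.

Lemma Pi_rho_cq : cq_state (measA U rho).
Proof.
pose p l := complex.Re (\tr (Xl l)).
have hp : forall l, \tr (Xl l) = (p l)%:C%C by move=> l; apply: ge0_realC; apply: Xtr_ge0.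
exists U, p, (fun l => if p l == 0 then delta_mx b0 b0 else (p l)^-1%:C%C *: Xl l).
split => //.
- by move=> l; have := Xtr_ge0 l; rewrite lecE /= => /andP[].
- by rewrite /p -Re_sum sum_Xtr.
- move=> l; case: ifP => [_|/negbT pl0]; first exact: delta_state.
  split.
  + by apply: herm_scale; apply: Xherm.
  + apply: psd_scale; last exact: Xpsd.
    rewrite ler0c invr_ge0; have := Xtr_ge0 l; rewrite lecE /= => /andP[] //.
  + by rewrite mxtraceZ hp -rmorphM mulVf.
- rewrite /measA; apply: eq_bigr => l _; rewrite QrhoQ //.
  case: ifP => [/eqP pl0 | /negbT pl0].
    have -> : Xl l = 0.
      by apply: psd_tr0; [apply: Xherm | apply: Xpsd | rewrite hp pl0].
    by rewrite pl0 scale0r tensmx0.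
  by rewrite tensmxZr scalerA -rmorphM divff // scale1r.
Qed.

End Meas2.

Unset Implicit Arguments.

Theorem mainTheorem6 (R : realType) (dA dB : nat)
  (EA : 'I_(dA * dA) -> 'M[R[i]]_dA) (EB : 'I_(dB * dB) -> 'M[R[i]]_dB)
  (rho : 'M[R[i]]_(dA * dB)) :
  herm_onb EA -> herm_onb EB -> is_state rho ->
  DG rho = D12 EA EB rho.
Proof.
move=> hA hB hrho.
have hr : Defs.hermitian rho by case: hrho.
have [k _] : exists k : 'I_(dA * dB), true.
  case: (pickP (fun _ : 'I_(dA * dB) => true)) => [k _|h]; first by exists k.
  case: hrho => _ _; rewrite /mxtrace big_pred0 // => /eqP.
  by rewrite eq_sym oner_eq0.
pose b0 := (mxtens_unindex k).2.
pose a := hs_norm2 rho.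
have hM : forall U : 'M[R[i]]_dA,
    M12 EA EB (measA U rho) ^+ 2 = hs_norm2 (measA U rho).
  move=> U; apply: M12_hs => //.
  by rewrite /Defs.hermitian Pi_adj hr.
rewrite /DG /D12 M12_hs // -/a.
set T := (X in sup X).
set S := (X in inf X).
have hU1 : Defs.unitary (1%:M : 'M[R[i]]_dA) by rewrite /Defs.unitary adjmx1 mulmx1.
have hTub : ubound T a.
  move=> _ [U hU <-]; rewrite hM.
  suff : (hs_norm2 (measA U rho) <= a)%R by [].
  by have := hs_ge0 (rho - measA U rho); rewrite hs_Pi_eq // subr_ge0.
have hT0 : T !=set0 by exists (M12 EA EB (measA 1%:M rho) ^+ 2); exists 1%:M.
have hS0 : S !=set0.
  exists (hs_norm2 (rho - measA 1%:M rho)); exists (measA 1%:M rho) => //.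
  exact: (Pi_rho_cq hU1 hrho b0).
have hSlb : lbound S 0 by move=> _ [chi _ <-]; exact: hs_ge0.
have hsupT : ubound T (sup T) by apply: ub_le_sup; exists a.
have hinfS : lbound S (inf S) by apply: ge_inf; exists 0.
apply/eqP; rewrite eq_le; apply/andP; split.
- rewrite lerBrDr addrC -lerBrDr.
  apply: ge_sup => // _ [U hU <-]; rewrite hM lerBrDr addrC -lerBrDr -hs_Pi_eq //.
  apply: hinfS; exists (measA U rho) => //.
  exact: (Pi_rho_cq hU hrho b0).
- apply: lb_le_inf => // _ [chi [U [p [chis [hU _ _ _ hchi]]]] <-].
  have hfix := cq_fixed hU hchi.
  have ht : hs_norm2 (measA U rho) <= sup T by rewrite -hM; apply: hsupT; exists U.
  apply: le_trans (hs_Pi_le hU rho hfix); by rewrite /a lerD2l lerN2.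
Qed.
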